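(* Let $N=\{1,2,\dots,n\}$ be a set of players and let $v:2^N\to\mathbb{R}$ be a monotonic characteristic function with $v(\emptyset)=0$, the grand coalition having value $v(N)$. Let $x=(x_1,\dots,x_n)$ be a payoff vector, where the players are indexed so that $x_1\le x_2\le\dots\le x_n$, and let $(\phi_1,\dots,\phi_n)$ be the Shapley values of the players with the same indices; assume $\phi_n>0$. Then $x$ is both stable and proportional if and only if for every $i\in\{1,\dots,n\}$, $$x_i=\phi_i\,\frac{v(N)}{\phi_n}\qquad\text{and}\qquad \phi_i\,\frac{v(N)}{\phi_n}\;\ge\; v(\{1,2,\dots,i\}).$$
   Context: A characteristic function $v:2^N\to\mathbb{R}$ assigns a value $v(C)$ to each coalition $C\subseteq N$; it is monotonic if $C\subseteq C'$ implies $v(C)\le v(C')$. When the grand coalition $N$ forms, a payoff vector is a vector $x=(x_1,\dots,x_n)\in\mathbb{R}^n$ with $x_i\le v(N)$ for every player $i$ (each player individually receives at most $v(N)$; the sum of payoffs is not restricted). A payoff vector $x$ is stable if for every nonempty coalition $C\subseteq N$ there exists $k\in C$ with $x_k\ge v(C)$. The Shapley value of player $i$ is $$\phi_i=\sum_{S\subseteq N\setminus\{i\}}\frac{|S|!\,(n-|S|-1)!}{n!}\big(v(S\cup\{i\})-v(S)\big).$$ A payoff vector $x$ is proportional if there exists a constant $\alpha>0$ with $x_i=\alpha\phi_i$ for all $i$. *)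

(* Defs.v *)
(* Players are 'I_n.+1 (i.e. N = {1,...,n+1} shifted to 0-based);
   coalitions are {set 'I_n.+1}; values in an arbitrary realFieldType R. *)
From mathcomp Require Import all_boot all_order all_algebra.
Set Implicit Arguments. Unset Strict Implicit. Unset Printing Implicit Defensive.
Import Order.TTheory GRing.Theory Num.Theory.
Local Open Scope ring_scope.

Section Game.
Variables (R : realFieldType) (n : nat).
Notation P := ('I_n).

Definition monotonic (v : {set P} -> R) : Prop :=
  forall C C' : {set P}, C \subset C' -> v C <= v C'.

Definition payoff_vector (v : {set P} -> R) (x : P -> R) : Prop :=
  forall i, x i <= v [set: P].

Definition stable (v : {set P} -> R) (x : P -> R) : Prop :=
  forall C : {set P}, C != set0 -> exists2 k, k \in C & v C <= x k.

Definition shapley (v : {set P} -> R) (i : P) : R :=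
  \sum_(S : {set P} | i \notin S)
     ((#|S|`! * (n - #|S| - 1)`!)%:R / (n`!)%:R) * (v (i |: S) - v S).

Definition proportional (v : {set P} -> R) (x : P -> R) : Prop :=
  exists2 alpha : R, 0 < alpha & forall i, x i = alpha * shapley v i.
End Game.

(* Main.v *)
Require Import Defs.
From mathcomp Require Import all_boot all_order all_algebra.
Import Order.TTheory GRing.Theory Num.Theory.
Local Open Scope ring_scope.

Theorem theorem6 (R : realFieldType) (n : nat)
  (v : {set 'I_n.+1} -> R) (x : 'I_n.+1 -> R) :
  monotonic v -> v set0 = 0 ->
  payoff_vector v x ->
  (forall i j : 'I_n.+1, (i <= j)%N -> x i <= x j) ->
  0 < shapley v ord_max ->
  (stable v x /\ proportional v x) <->
  (forall i : 'I_n.+1,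
     x i = shapley v i * (v [set: 'I_n.+1] / shapley v ord_max) /\
     v [set j : 'I_n.+1 | (j <= i)%N] <=
       shapley v i * (v [set: 'I_n.+1] / shapley v ord_max)).
Proof.
move=> mono v0 pay xmono phipos.
have phine : shapley v ord_max != 0 by rewrite gt_eqF.
split.
- case=> st [alpha apos xa].
  have [k _ Hk] := st [set: 'I_n.+1] (introT (set0Pn _) (ex_intro _ ord0 (in_setT _))).
  have xmax : x ord_max = v [set: 'I_n.+1].
    apply: le_anti; rewrite pay /=.
    apply: le_trans Hk _; apply: xmono; rewrite -ltnS; exact: ltn_ord.
  have ae : alpha = v [set: 'I_n.+1] / shapley v ord_max.
    by rewrite -xmax xa mulfK.
  have xi : forall i, x i = shapley v i * (v [set: 'I_n.+1] / shapley v ord_max).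
    by move=> i; rewrite xa ae mulrC.
  move=> i; split; first exact: xi.
  rewrite -xi.
  have : [set j : 'I_n.+1 | (j <= i)%N] != set0.
    by apply/set0Pn; exists i; rewrite inE.
  move=> /st [k']; rewrite inE => ki H; apply: le_trans H _; exact: xmono.
- move=> H.
  set c := v [set: 'I_n.+1] / shapley v ord_max.
  have vNpos : 0 < v [set: 'I_n.+1].
    rewrite ltNge; apply/negP => vle.
    have vz : forall C, v C = 0.
      move=> C; apply: le_anti; rewrite (le_trans (mono _ _ (subsetT C)) vle) /=.
      by rewrite -v0; apply: mono; exact: sub0set.
    move: phipos; rewrite /shapley big1 ?ltxx // => S _.
    by rewrite !vz subrr mulr0.
  split; last first.
    exists c; first by rewrite /c divr_gt0.
    by move=> i; rewrite (H i).1 mulrC.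
  move=> C /set0Pn [k0 k0C].
  pose k := [arg max_(k > k0 in C) (k : nat)].
  exists k; first by rewrite /k; case: arg_maxnP.
  have sub : C \subset [set j : 'I_n.+1 | (j <= k)%N].
    apply/subsetP => j jC; rewrite inE /k.
    by case: arg_maxnP => // m _ Hm; apply: Hm.
  apply: le_trans (mono _ _ sub) _.
  by rewrite (H k).1; exact: (H k).2.
Qed.
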